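(* Let $(X_n,\|\cdot\|_n)_{n\ge1}$ be a sequence of finite dimensional real Banach spaces, each having a normalized $1$-unconditional basis, and let $(X,\|\cdot\|)$ be the space defined in the context. Then the closed unit ball $B_X$ of $X$ is compact in the topology of pointwise convergence, i.e. the coarsest topology on $X$ making each coordinate map $x=(x_n)\mapsto x_n\in X_n$ continuous. In particular, if $x_m\in X$ with $\|x_m\|\le1$ for all $m$ and $x\in X$ with $x_m\overset{p}{\to}x$, then $\|x\|\le1$.
   Context: $c_{00}((X_n))$ is the vector space of sequences $(x_1,x_2,\dots)$ with $x_k\in X_k$ and only finitely many $x_k\ne0$; $(x_1,\dots,x_n)$ denotes $(x_1,\dots,x_n,0,0,\dots)$. On $c_{00}((X_n))$ define inductively $\|(x_1)\|=\|x_1\|_1$ (the norm of $X_1$) and, for $n\ge2$, $$\|(x_1,\dots,x_n)\|=\Big(1-\tfrac{1}{n+1}\Big)\big(\|x_n\|_n+\|(x_1,\dots,x_{n-1})\|\big)+\tfrac{1}{n+1}\max\Big\{\tfrac{\|x_n\|_n}{n},\ \|(x_1,\dots,x_{n-1})\|\Big\}.$$ $X$ is the completion of $(c_{00}((X_n)),\|\cdot\|)$, identified with the space of sequences $x=(x_n)$, $x_n\in X_n$, with $\sum_n\|x_n\|_n<\infty$, where $\|x\|=\lim_k\|(x_1,\dots,x_k)\|$. For $x_m=(x_{m1},x_{m2},\dots)$ and $x=(x_1,x_2,\dots)$ in $X$, $x_m\overset{p}{\to}x$ means $\|x_{mn}-x_n\|_n\to0$ as $m\to\infty$ for every $n$.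 *)

(* Defs.v *)
From HB Require Import structures.
From mathcomp Require Import all_boot all_order all_algebra.
From mathcomp Require Import all_classical all_reals all_analysis.
Set Implicit Arguments. Unset Strict Implicit. Unset Printing Implicit Defensive.
Import Order.TTheory GRing.Theory Num.Theory.
Import numFieldNormedType.Exports.
Local Open Scope classical_set_scope.
Local Open Scope ring_scope.

(* Paper index n >= 1 corresponds to Rocq index n-1 : nat. *)

Definition is_basis (R : realType) (V : normedModType R) (d : nat)
    (e : 'I_d -> V) : Prop :=
  (forall v : V, exists a : 'I_d -> R, v = \sum_(i < d) a i *: e i) /\
  (forall a : 'I_d -> R, \sum_(i < d) a i *: e i = 0 -> forall i, a i = 0).

Definition normalized_basis (R : realType) (V : normedModType R) (d : nat)
    (e : 'I_d -> V) : Prop := forall i, `|e i| = 1.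

Definition one_unconditional (R : realType) (V : normedModType R) (d : nat)
    (e : 'I_d -> V) : Prop :=
  forall (a eps : 'I_d -> R), (forall i, eps i = 1 \/ eps i = -1) ->
    `|\sum_(i < d) (eps i * a i) *: e i| = `|\sum_(i < d) a i *: e i|.

(* partnorm X x k = ||(x_1, ..., x_{k+1})|| in the paper's numbering *)
Fixpoint partnorm (R : realType) (X : nat -> normedModType R)
    (x : forall n, X n) (k : nat) : R :=
  match k with
  | 0 => `|x 0%N|
  | k'.+1 =>
      let a := `|x k| in
      let b := partnorm x k' in
      (1 - 1 / (k.+2)%:R) * (a + b) + 1 / (k.+2)%:R * Num.max (a / (k.+1)%:R) b
  end.

Definition inX (R : realType) (X : nat -> normedModType R) (x : forall n, X n) : Prop :=
  cvg ([series `|x n|]_n @ \oo).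

Definition xnorm (R : realType) (X : nat -> normedModType R) (x : forall n, X n) : R :=
  lim (partnorm x @ \oo).

Definition unit_ball (R : realType) (X : nat -> normedModType R) : set (forall n, X n) :=
  [set x | inX x /\ xnorm x <= 1].
Arguments unit_ball {R} X.

(* Main.v *)
Require Import Defs.
From HB Require Import structures.
From mathcomp Require Import all_boot all_order all_algebra.
From mathcomp Require Import all_classical all_reals all_analysis.
From mathcomp Require Import lra.
Import Order.TTheory GRing.Theory Num.Theory.
Import numFieldNormedType.Exports.
Local Open Scope classical_set_scope.
Local Open Scope ring_scope.

Section PN.
Context (R : realType) (X : nat -> normedModType R).
Implicit Types (x : forall n, X n).

Lemma pn_S x k : partnorm x k.+1 =
  (1 - 1 / (k.+3)%:R) * (`|x k.+1| + partnorm x k) +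
  1 / (k.+3)%:R * Num.max (`|x k.+1| / (k.+2)%:R) (partnorm x k).
Proof. by []. Qed.

Lemma pn_step x k : partnorm x k + `|x k.+1| / 2 <= partnorm x k.+1.
Proof.
rewrite pn_S.
set a := `|x k.+1|; set b := partnorm x k; set m := Num.max _ _.
have hm : b <= m by rewrite /m le_max lexx orbT.
have ha : 0 <= a by apply: normr_ge0.
set t := 1 / (k.+3)%:R.
have ht0 : 0 <= t by rewrite /t divr_ge0 // ler0n.
have ht1 : t <= 1/2.
  rewrite /t ler_pdivrMr ?ltr0n // mulrC mulrA mulr1 ler_pdivlMr ?ltr0n //.
  by rewrite mul1r ler_nat.
have : t * b <= t * m by rewrite ler_wpM2l.
nra.
Qed.

Lemma pn_ge0 x k : 0 <= partnorm x k.
Proof.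
elim: k => [|k IH]; first exact: normr_ge0.
apply: le_trans (pn_step x k).
by rewrite addr_ge0 // divr_ge0.
Qed.

Lemma pn_up x k : partnorm x k.+1 <= partnorm x k + `|x k.+1|.
Proof.
rewrite pn_S.
set a := `|x k.+1|; set b := partnorm x k.
have hb : 0 <= b by apply: pn_ge0.
have ha : 0 <= a by apply: normr_ge0.
have hm : Num.max (a / (k.+2)%:R) b <= a + b.
  have h1 : a / (k.+2)%:R <= a.
    by rewrite ler_pdivrMr ?ltr0n // ler_peMr // ler1n.
  rewrite ge_max; apply/andP; split.
    by apply: le_trans h1 _; rewrite lerDl.
  by rewrite lerDr.
set t := 1 / (k.+3)%:R.
have ht0 : 0 <= t by rewrite /t divr_ge0 // ler0n.
have : t * Num.max (a / (k.+2)%:R) b <= t * (a + b) by rewrite ler_wpM2l.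
nra.
Qed.

Lemma pn_mono x : nondecreasing_seq (partnorm x).
Proof.
apply/nondecreasing_seqP => k; apply: le_trans (pn_step x k).
by rewrite lerDl divr_ge0.
Qed.

Lemma pn_sum_ge x k : \sum_(0 <= i < k.+1) `|x i| <= 2 * partnorm x k.
Proof.
elim: k => [|k IH]; first by rewrite big_nat1 /= ler_peMl // ler1n.
have -> : \sum_(0 <= i < k.+2) `|x i| = \sum_(0 <= i < k.+1) `|x i| + `|x k.+1|.
  by rewrite big_nat_recr.
have := pn_step x k; set a := `|x k.+1|. nra.
Qed.

Lemma pn_sum_le x k : partnorm x k <= \sum_(0 <= i < k.+1) `|x i|.
Proof.
elim: k => [|k IH]; first by rewrite big_nat1.
have -> : \sum_(0 <= i < k.+2) `|x i| = \sum_(0 <= i < k.+1) `|x i| + `|x k.+1|.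
  by rewrite big_nat_recr.
have := pn_up x k; set a := `|x k.+1|; lra.
Qed.

Lemma series_nd x : nondecreasing_seq (series (fun n => `|x n|)).
Proof. by apply: nondecreasing_series => n _ _; exact: normr_ge0. Qed.

Lemma ball_le x : unit_ball X x -> forall k, partnorm x k <= 1.
Proof.
move=> [hX hn] k.
have hb j : partnorm x j <= limn (series (fun n => `|x n|)).
  exact: le_trans (pn_sum_le x j) (nondecreasing_cvgn_le (series_nd x) hX j.+1).
have hc : cvgn (partnorm x).
  apply: nondecreasing_is_cvgn; first exact: pn_mono.
  by exists (limn (series (fun n => `|x n|))) => _ [n _ <-].
exact: le_trans (nondecreasing_cvgn_le (pn_mono x) hc k) hn.
Qed.

Lemma le_ball x : (forall k, partnorm x k <= 1) -> unit_ball X x.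
Proof.
move=> h.
have hc : cvgn (partnorm x).
  apply: nondecreasing_is_cvgn; first exact: pn_mono.
  by exists 1 => _ [n _ <-].
split.
  apply: nondecreasing_is_cvgn; first exact: series_nd.
  exists 2 => _ [[|n] _ <-].
    by rewrite /series /= big_geq.
  by rewrite /series /=; apply: le_trans (pn_sum_ge x n) _; have := h n; lra.
by apply: limr_le => //; apply: nearW.
Qed.

Lemma cvg_maxr {T} (F : set_system T) {FF : Filter F} (f g : T -> R) a b :
  f @ F --> a -> g @ F --> b -> Num.max (f t) (g t) @[t --> F] --> Num.max a b.
Proof.
move=> hf hg.
under eq_cvg do rewrite maxr_absE.
rewrite maxr_absE.
apply: cvgM; last exact: cvg_cst.
apply: cvgD; first exact: cvgD.
by apply: cvg_norm; apply: cvgB.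
Qed.

Lemma pn_cvg {T} (F : set_system T) {FF : Filter F} (u : T -> forall n, X n) (g : forall n, X n) :
  (forall n, `|u t n| @[t --> F] --> `|g n|) ->
  forall k, partnorm (u t) k @[t --> F] --> partnorm g k.
Proof.
move=> h; elim=> [|k IH]; first exact: h.
rewrite pn_S; under eq_cvg do rewrite pn_S.
apply: cvgD; apply: cvgM; try exact: cvg_cst.
  by apply: cvgD.
apply: cvg_maxr => //.
by apply: cvgM => //; exact: cvg_cst.
Qed.

Lemma part2 (xs : nat -> forall n, X n) (x : forall n, X n) :
  (forall m, unit_ball X (xs m)) -> inX x ->
  (forall n, (fun m => `|xs m n - x n|) @ \oo --> 0) -> xnorm x <= 1.
Proof.
move=> hb _ hc; suff hk : forall k, partnorm x k <= 1 by case: (@le_ball x hk).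
move=> k.
have h n : `|xs m n| @[m --> \oo] --> `|x n|.
  apply: cvg_norm.
  have h0 : (fun m => xs m n - x n) @ \oo --> 0 by apply: norm_cvg0; exact: hc.
  have -> : x n = 0 + x n by rewrite add0r.
  under eq_cvg do rewrite -(subrK (x n) (xs _ n)).
  by apply: cvgD => //; exact: cvg_cst.
have hcv : partnorm (xs t) k @[t --> \oo] --> partnorm x k by apply: pn_cvg.
have hn : \forall m \near \oo, [set r : R | r <= 1] (partnorm (xs m) k).
  by apply: nearW => m; apply: ball_le.
exact: (closed_cvg _ (@closed_le _ (1:R)) hn _ hcv).
Qed.
End PN.
Section FD.
Context (R : realType) (V : normedModType R) (d : nat) (e : 'I_d -> V).
Hypotheses (hB : is_basis e) (hN : normalized_basis e) (hU : one_unconditional e).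

Lemma coef_bound (a : 'I_d -> R) i : `|a i| <= `|\sum_(j < d) a j *: e j|.
Proof.
pose eps j : R := if j == i then 1 else -1.
have heps j : eps j = 1 \/ eps j = -1 by rewrite /eps; case: eqP; [left|right].
have hw := hU a eps heps.
set v := \sum_(j < d) a j *: e j in hw *.
set w := \sum_(j < d) (eps j * a j) *: e j in hw.
have hid : v + w = (a i *+ 2) *: e i.
  rewrite /v /w -big_split /= (bigD1 i) //= big1 ?addr0.
    by rewrite /eps eqxx /= mul1r -scalerDl mulr2n.
  by move=> j /negPf hj; rewrite /eps hj mulN1r scaleNr subrr.
have : `|(a i *+ 2) *: e i| <= `|v| + `|w| by rewrite -hid ler_normD.
rewrite normrZ hN mulr1 hw normrMn.
lra.
Qed.

Lemma ball_compact r : compact [set v : V | `|v| <= r].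
Proof.
pose f : prod_topology (fun _ : 'I_d => R) -> V := fun a => \sum_(j < d) a j *: e j.
have fc : continuous f.
  apply: continuous_big; first exact: add_continuous.
  move=> j _ a.
  apply: (@continuous_comp (prod_topology (fun _ : 'I_d => R)) R V (proj j) (fun k => k *: e j) a).
    exact: proj_continuous.
  exact: scalel_continuous.
pose K := [set a : prod_topology (fun _ : 'I_d => R) | forall i, `[-r, r]%classic (a i)].
have Kc : compact K.
  exact: (@tychonoff _ (fun _ : 'I_d => R) (fun _ => `[-r, r]%classic) (fun i => @segment_compact R (-r) r)).
have Bcl : closed [set v : V | `|v| <= r].
  have nc : {in ~` ((@Num.norm _ V) @^-1` [set x : R | x <= r]), continuous (@Num.norm _ V)}.
    by move=> ? _; exact: norm_continuous.
  exact: (preimage_closed nc (@closed_le R r)).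
have Cc : compact (K `&` f @^-1` [set v : V | `|v| <= r]).
  apply: compact_closedI Kc _.
  by apply: preimage_closed => //; move=> ? _; exact: fc.
have Ci : compact (f @` (K `&` f @^-1` [set v : V | `|v| <= r])).
  by apply: continuous_compact Cc; apply: continuous_in_subspaceT => ? _; exact: fc.
suff hE : f @` (K `&` f @^-1` [set v : V | `|v| <= r]) = [set v : V | `|v| <= r].
  by rewrite -hE.
rewrite eqEsubset; split.
  by move=> _ [a [_ ha] <-].
move=> v hv; have [a ha] := hB.1 v.
exists a => //; split => //=.
  move=> i /=; rewrite in_itv /= -ler_norml.
  by apply: le_trans (coef_bound a i) _; rewrite -ha.
by rewrite /f -ha.
Qed.
End FD.

Lemma ball_coord (R : realType) (X : nat -> normedModType R) (x : forall n, X n) :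
  unit_ball X x -> forall n, `|x n| <= 2.
Proof.
move=> hx [|k].
  have := @ball_le R X x hx 0; rewrite /= => h; apply: le_trans h _; lra.
have h1 := @ball_le R X x hx k.+1; have h2 := @pn_step R X x k; have h3 := @pn_ge0 R X x k.
lra.
Qed.

Theorem proposition2p1 (R : realType) (X : nat -> normedModType R)
    (d : nat -> nat) (e : forall n, 'I_(d n) -> X n) :
  (forall n, is_basis (e n)) ->
  (forall n, normalized_basis (e n)) ->
  (forall n, one_unconditional (e n)) ->
  compact (unit_ball X : set (prod_topology (fun n => (X n : topologicalType)))) /\
  (forall (xs : nat -> forall n, X n) (x : forall n, X n),
     (forall m, unit_ball X (xs m)) -> inX x ->
     (forall n, (fun m => `|xs m n - x n|) @ \oo --> 0) ->
     xnorm x <= 1).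
Proof.
move=> hB hN hU; split; last exact: part2.
have Bc : compact [set f : prod_topology (fun n => (X n : topologicalType)) |
                    forall n, [set v : X n | `|v| <= 2] (f n)].
  have := (@tychonoff _ (fun n => (X n : topologicalType)) (fun n => [set v : X n | `|v| <= 2])
           (fun n => @ball_compact R (X n) (d n) (e n) (hB n) (hN n) (hU n) 2)).
  exact.
apply: (subclosed_compact _ Bc); last by move=> x hx n; exact: ball_coord.
have -> : (unit_ball X : set (prod_topology (fun n => (X n : topologicalType)))) =
   \bigcap_(k in setT) ((fun z : prod_topology (fun n => (X n : topologicalType)) =>
                            partnorm z k) @^-1` [set r : R | r <= 1]).
  rewrite eqEsubset; split.
    by move=> x hx k _; exact: ball_le.
  by move=> x hx; apply: le_ball => k; exact: hx.
apply: closed_bigI => k _.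
have nc : {in ~` ((fun z : prod_topology (fun n => (X n : topologicalType)) =>
                            partnorm z k) @^-1` [set r : R | r <= 1]),
           continuous (fun z : prod_topology (fun n => (X n : topologicalType)) =>
                            partnorm z k)}.
  move=> z _; apply: (@pn_cvg R X _ (nbhs z) _ (fun w => w) z) => n.
  apply: cvg_norm.
  exact: (@proj_continuous _ (fun n => (X n : topologicalType)) n z).
exact: (preimage_closed nc (@closed_le R 1)).
Qed.
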